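(* For every $n\ge1$ and $a>0$, the quantities $r_n=r_n(a)$ satisfy the second-order difference equation $$a^2r_n^2=\frac{n+r_n}{2}\,(r_{n+1}+r_n)(r_n+r_{n-1}).$$ Equivalently, $y_n:=-2r_n/a^2$ satisfies $$(y_{n+1}+y_n)(y_n+y_{n-1})=\frac{-4y_n^2}{y_n-2n/a^2},$$ which is a case of the modified discrete Painlevé II equation $(x_{n-1}+x_n)(x_n+x_{n+1})=\frac{-4x_n^2+m^2}{\lambda x_n+z_n}$ with $m=0$, $\lambda=1$, $z_n=-2n/a^2$.
   Context: Fix $a>0$. Let $w(x)=e^{-x^2}\chi_{\mathbb{R}\setminus(-a,a)}(x)$. Let $P_n$ be the monic orthogonal polynomials for $w$ on $\mathbb{R}$, with $h_n=\int P_n^2w\,dx$. Define $$r_n(a)=\frac{2e^{-a^2}P_n(a)P_{n-1}(a)}{h_{n-1}(a)}\ (n\ge1),\qquad r_0(a)=0.$$ *)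

(* Defs.v *)
From Stdlib Require Import Reals Lra.
Open Scope R_scope.

Definition right_improper_int (f : R -> R) (c l : R) : Prop :=
  forall eps, 0 < eps -> exists B, c <= B /\ forall b, B <= b ->
      exists pr : Riemann_integrable f c b, Rabs (RiemannInt pr - l) < eps.

Definition left_improper_int (f : R -> R) (c l : R) : Prop :=
  forall eps, 0 < eps -> exists B, B <= c /\ forall b, b <= B ->
      exists pr : Riemann_integrable f b c, Rabs (RiemannInt pr - l) < eps.

(* Integration against the weight w(x) = exp(-x^2) * chi_{R \ (-a,a)}(x). *)
Definition w_integral (a : R) (f : R -> R) (l : R) : Prop :=
  exists l1 l2,
    left_improper_int (fun x => f x * exp (- x ^ 2)) (- a) l1 /\
    right_improper_int (fun x => f x * exp (- x ^ 2)) a l2 /\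
    l = l1 + l2.

Fixpoint low_sum (c : nat -> R) (x : R) (n : nat) : R :=
  match n with
  | O => 0
  | S m => low_sum c x m + c m * x ^ m
  end.

Definition mpoly (C : nat -> nat -> R) (n : nat) (x : R) : R :=
  x ^ n + low_sum (C n) x n.

Definition monic_OPs (a : R) (C : nat -> nat -> R) (h : nat -> R) : Prop :=
  (forall m n, m <> n ->
     w_integral a (fun x => mpoly C m x * mpoly C n x) 0) /\
  (forall n, w_integral a (fun x => mpoly C n x ^ 2) (h n)).

Definition r_seq (a : R) (C : nat -> nat -> R) (h : nat -> R) (n : nat) : R :=
  match n with
  | O => 0
  | S m => 2 * exp (- a ^ 2) * mpoly C n a * mpoly C m a / h m
  end.

(* Main.v *)
Require Import Defs.
From Stdlib Require Import Reals Lra Lia Psatz FunctionalExtensionality.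
From Coquelicot Require Import Coquelicot.
Open Scope R_scope.

Lemma RI_to_is (f : R -> R) a b (pr : Riemann_integrable f a b) :
  is_RInt f a b (RiemannInt pr).
Proof.
  rewrite <- (RInt_Reals f a b pr). apply (@RInt_correct R_CompleteNormedModule).
  apply ex_RInt_Reals_1; exact pr.
Qed.

Lemma is_to_RI (f : R -> R) a b v : is_RInt f a b v ->
  exists pr : Riemann_integrable f a b, RiemannInt pr = v.
Proof.
  intro H. assert (He : ex_RInt f a b) by (exists v; exact H).
  exists (ex_RInt_Reals_0 f a b He).
  rewrite <- RInt_Reals. apply is_RInt_unique; exact H.
Qed.

Lemma isu (F : R -> R) a b (v : R) : is_RInt F a b v -> RInt F a b = v.
Proof. intro H. apply (@is_RInt_unique R_CompleteNormedModule). exact H. Qed.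

Definition RI (F : R -> R) c l := forall eps, 0 < eps -> exists B, c <= B /\
  forall b, B <= b -> exists v, is_RInt F c b v /\ Rabs (v - l) < eps.
Definition LI (F : R -> R) c l := forall eps, 0 < eps -> exists B, B <= c /\
  forall b, b <= B -> exists v, is_RInt F b c v /\ Rabs (v - l) < eps.
Definition W (a : R) (f : R -> R) l := exists l1 l2,
  LI (fun x => f x * exp (- x ^ 2)) (- a) l1 /\
  RI (fun x => f x * exp (- x ^ 2)) a l2 /\ l = l1 + l2.

Lemma w_W a f l : w_integral a f l -> W a f l.
Proof.
  intros [l1 [l2 [H1 [H2 H3]]]]. exists l1, l2. split; [|split; [|exact H3]].
  - intros eps He. destruct (H1 eps He) as [B [HB H]]. exists B; split; auto.
    intros b Hb. destruct (H b Hb) as [pr Hpr]. exists (RiemannInt pr); split; auto.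
    apply RI_to_is.
  - intros eps He. destruct (H2 eps He) as [B [HB H]]. exists B; split; auto.
    intros b Hb. destruct (H b Hb) as [pr Hpr]. exists (RiemannInt pr); split; auto.
    apply RI_to_is.
Qed.

Lemma opp_is (F : R -> R) x y v : is_RInt F x y v ->
  is_RInt (fun t => F (- t)) (- y) (- x) v.
Proof.
  intro H.
  assert (H' : is_RInt F (- - y) (- - x) (opp v)).
  { rewrite !Ropp_involutive. apply is_RInt_swap.
    exact H. }
  apply is_RInt_comp_opp in H'. apply is_RInt_opp in H'.
  rewrite opp_opp in H'.
  eapply is_RInt_ext; [|exact H']. intros t _. apply Ropp_involutive.
Qed.

Lemma LI_RI F c l : LI F c l -> RI (fun x => F (- x)) (- c) l.
Proof.
  intros H eps He. destruct (H eps He) as [B [HB H1]]. exists (- B); split; [lra|].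
  intros b Hb. destruct (H1 (- b)) as [v [Hv1 Hv2]]; [lra|]. exists v; split; auto.
  assert (K := opp_is _ _ _ _ Hv1). rewrite Ropp_involutive in K. exact K.
Qed.

Lemma RI_LI F c l : RI (fun x => F (- x)) (- c) l -> LI F c l.
Proof.
  intros H eps He. destruct (H eps He) as [B [HB H1]]. exists (- B); split; [lra|].
  intros b Hb. destruct (H1 (- b)) as [v [Hv1 Hv2]]; [lra|]. exists v; split; auto.
  apply opp_is in Hv1. rewrite !Ropp_involutive in Hv1.
  eapply is_RInt_ext; [|exact Hv1]. intros t _. simpl. rewrite Ropp_involutive; auto.
Qed.

Lemma RI_lin F G c l1 l2 k : RI F c l1 -> RI G c l2 ->
  RI (fun x => F x + k * G x) c (l1 + k * l2).
Proof.
  intros H1 H2 eps He.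
  assert (Hk : 0 < Rabs k + 1) by (pose proof (Rabs_pos k); lra).
  destruct (H1 (eps / 2)) as [B1 [HB1 K1]]; [lra|].
  destruct (H2 (eps / 2 / (Rabs k + 1))) as [B2 [HB2 K2]].
  { apply Rdiv_lt_0_compat; lra. }
  exists (Rmax B1 B2); split; [apply Rle_trans with B1; auto; apply Rmax_l|].
  intros b Hb. destruct (K1 b) as [v1 [Hv1 Hw1]]; [apply Rle_trans with (Rmax B1 B2); auto; apply Rmax_l|].
  destruct (K2 b) as [v2 [Hv2 Hw2]]; [apply Rle_trans with (Rmax B1 B2); auto; apply Rmax_r|].
  exists (v1 + k * v2); split.
  - apply (is_RInt_plus F (fun y => k * G y)); auto. apply (is_RInt_scal G); auto.
  - replace (v1 + k * v2 - (l1 + k * l2)) with ((v1 - l1) + k * (v2 - l2)) by ring.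
    eapply Rle_lt_trans; [apply Rabs_triang|]. rewrite Rabs_mult.
    assert (Rabs k * Rabs (v2 - l2) <= Rabs k * (eps / 2 / (Rabs k + 1))).
    { apply Rmult_le_compat_l; [apply Rabs_pos|lra]. }
    assert (Rabs k * (eps / 2 / (Rabs k + 1)) < eps / 2).
    { unfold Rdiv. rewrite <- Rmult_assoc. 
      apply Rmult_lt_reg_r with (Rabs k + 1); auto.
      rewrite Rmult_assoc, Rinv_l by lra. nra. }
    lra.
Qed.

Lemma small0 x : (forall eps, 0 < eps -> Rabs x < eps) -> x = 0.
Proof.
  intro H. destruct (Req_dec x 0); auto.
  assert (0 < Rabs x) by (apply Rabs_pos_lt; auto).
  specialize (H (Rabs x) H1). lra.
Qed.

Lemma RI_uniq F c l1 l2 : RI F c l1 -> RI F c l2 -> l1 = l2.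
Proof.
  intros H1 H2. apply Rminus_diag_uniq. apply small0. intros eps He.
  destruct (H1 (eps/2)) as [B1 [_ K1]]; [lra|].
  destruct (H2 (eps/2)) as [B2 [_ K2]]; [lra|].
  destruct (K1 (Rmax B1 B2)) as [v1 [Hv1 Hw1]]; [apply Rmax_l|].
  destruct (K2 (Rmax B1 B2)) as [v2 [Hv2 Hw2]]; [apply Rmax_r|].
  apply isu in Hv1. apply isu in Hv2. rewrite Hv1 in Hv2. subst v2.
  replace (l1 - l2) with (- (v1 - l1) + (v1 - l2)) by ring.
  eapply Rle_lt_trans; [apply Rabs_triang|]. rewrite Rabs_Ropp. lra.
Qed.

Lemma RI_ext F G c l : (forall x, F x = G x) -> RI F c l -> RI G c l.
Proof. intros H. replace G with F; auto. apply functional_extensionality; auto. Qed.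

Lemma W_lin a f g l1 l2 k : W a f l1 -> W a g l2 ->
  W a (fun x => f x + k * g x) (l1 + k * l2).
Proof.
  intros [m1 [m2 [A1 [A2 A3]]]] [n1 [n2 [B1 [B2 B3]]]].
  exists (m1 + k * n1), (m2 + k * n2). split; [|split].
  - apply RI_LI. apply LI_RI in A1. apply LI_RI in B1.
    eapply RI_ext; [|apply (RI_lin _ _ _ _ _ k A1 B1)]. intro x; simpl; ring.
  - eapply RI_ext; [|apply (RI_lin _ _ _ _ _ k A2 B2)]. intro x; simpl; ring.
  - subst; ring.
Qed.

Lemma W_uniq a f l1 l2 : W a f l1 -> W a f l2 -> l1 = l2.
Proof.
  intros [m1 [m2 [A1 [A2 A3]]]] [n1 [n2 [B1 [B2 B3]]]].
  apply LI_RI in A1. apply LI_RI in B1.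
  rewrite (RI_uniq _ _ _ _ A1 B1) in A3. rewrite (RI_uniq _ _ _ _ A2 B2) in A3. congruence.
Qed.

Lemma W_ext a f g l : (forall x, f x = g x) -> W a f l -> W a g l.
Proof. intros H. replace g with f; auto. apply functional_extensionality; auto. Qed.

Lemma W_comb a f g t l1 l2 k v : W a f l1 -> W a g l2 ->
  (forall x, t x = f x + k * g x) -> v = l1 + k * l2 -> W a t v.
Proof.
  intros H1 H2 H3 H4. subst v. eapply W_ext; [|apply (W_lin a f g l1 l2 k H1 H2)].
  intro; rewrite H3; auto.
Qed.

Lemma W_refl a f l : W a f l -> W a (fun x => f (- x)) l.
Proof.
  intros [m1 [m2 [A1 [A2 A3]]]]. exists m2, m1. split; [|split].
  - apply RI_LI. rewrite Ropp_involutive. eapply RI_ext; [|exact A2].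
    intro x; simpl. rewrite Ropp_involutive. f_equal. f_equal. f_equal. ring.
  - apply LI_RI in A1. rewrite Ropp_involutive in A1. eapply RI_ext; [|exact A1].
    intro x; simpl. f_equal. f_equal. f_equal. ring.
  - lra.
Qed.

Definition isPd (f : R -> R) (d : nat) := exists c, f = (fun x => low_sum c x d).

Lemma low_sum_eq c c' x n : (forall k, (k < n)%nat -> c k = c' k) ->
  low_sum c x n = low_sum c' x n.
Proof.
  induction n; simpl; intros H; auto.
  rewrite IHn by (intros; apply H; lia). rewrite H by lia. auto.
Qed.

Lemma isPd_ext f g d : isPd f d -> (forall x, f x = g x) -> isPd g d.
Proof.
  intros H E. replace g with f; auto. apply functional_extensionality; auto.
Qed.

Lemma isPd_mono f d D : isPd f d -> (d <= D)%nat -> isPd f D.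
Proof.
  intros [c Hc] HD. subst f. exists (fun k => if (k <? d)%nat then c k else 0).
  apply functional_extensionality; intro x.
  replace D with (d + (D - d))%nat by lia. induction (D - d)%nat as [|m IH].
  - rewrite Nat.add_0_r. apply low_sum_eq. intros k Hk.
    destruct (Nat.ltb_spec k d); auto; lia.
  - rewrite Nat.add_succ_r. simpl. rewrite <- IH.
    destruct (Nat.ltb_spec (d + m) d); [lia|]. ring.
Qed.

Lemma isPd_plus f g d : isPd f d -> isPd g d -> isPd (fun x => f x + g x) d.
Proof.
  intros [c Hc] [c' Hc']. subst. exists (fun k => c k + c' k).
  apply functional_extensionality; intro x. induction d; simpl; [ring|].
  rewrite <- IHd. ring.
Qed.

Lemma isPd_scal f d k : isPd f d -> isPd (fun x => k * f x) d.
Proof.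
  intros [c Hc]. subst. exists (fun j => k * c j).
  apply functional_extensionality; intro x. induction d; simpl; [ring|].
  rewrite <- IHd. ring.
Qed.

Lemma isPd_zero d : isPd (fun _ => 0) d.
Proof.
  apply isPd_mono with 0%nat; [|lia]. exists (fun _ => 0). reflexivity.
Qed.

Lemma isPd_const k : isPd (fun _ => k) 1.
Proof.
  exists (fun _ => k). apply functional_extensionality; intro x. simpl. ring.
Qed.

Lemma isPd_xmul f d : isPd f d -> isPd (fun x => x * f x) (S d).
Proof.
  intros [c Hc]. subst. exists (fun k => match k with O => 0 | S j => c j end).
  apply functional_extensionality; intro x. induction d; simpl; [ring|].
  simpl in IHd. rewrite Rmult_plus_distr_l, IHd. ring.
Qed.

Lemma isPd_comb f g d k : isPd f d -> isPd g d -> isPd (fun x => f x + k * g x) d.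
Proof. intros. apply isPd_plus; auto. apply isPd_scal; auto. Qed.

Lemma isPd_minus f g d : isPd f d -> isPd g d -> isPd (fun x => f x - g x) d.
Proof.
  intros. eapply isPd_ext. apply (isPd_comb f g d (-1)); auto. intro; simpl; ring.
Qed.

Lemma isPd_pow n : isPd (fun x => x ^ n) (S n).
Proof.
  induction n.
  - eapply isPd_ext; [apply isPd_const|]. intro; simpl; auto.
  - apply isPd_xmul; auto.
Qed.

Lemma isPd_powmul f e n : isPd f e -> isPd (fun x => x ^ n * f x) (n + e).
Proof.
  intro H. induction n.
  - eapply isPd_ext; [exact H|]. intro; simpl; ring.
  - eapply isPd_ext; [apply (isPd_xmul _ _ IHn)|]. intro; simpl; ring.
Qed.

Lemma isPd_mult f g d e : isPd f d -> isPd g e -> isPd (fun x => f x * g x) (d + e).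
Proof.
  intros [c Hc] Hg. subst f. induction d.
  - eapply isPd_ext; [apply (isPd_zero (0 + e))|]. intro; simpl; ring.
  - assert (H1 : isPd (fun x => low_sum c x d * g x) (S d + e)) by
      (eapply isPd_mono; [exact IHd|lia]).
    assert (H2 : isPd (fun x => c d * (x ^ d * g x)) (S d + e)).
    { apply isPd_scal. eapply isPd_mono; [apply isPd_powmul; exact Hg|lia]. }
    eapply isPd_ext; [apply (isPd_plus _ _ _ H1 H2)|]. intro; simpl; ring.
Qed.

Lemma low_sum_opp c x d : low_sum c (- x) d = low_sum (fun k => (-1) ^ k * c k) x d.
Proof.
  induction d; simpl; auto. rewrite IHd. f_equal.
  replace (- x) with ((-1) * x) by ring. rewrite Rpow_mult_distr. ring.
Qed.

Lemma isPd_opp f d : isPd f d -> isPd (fun x => f (- x)) d.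
Proof.
  intros [c Hc]. subst. exists (fun k => (-1) ^ k * c k).
  apply functional_extensionality; intro x. apply low_sum_opp.
Qed.

Lemma isPd_der f d : isPd f d -> exists f', isPd f' (pred d) /\ forall x, is_derive f x (f' x).
Proof.
  intros [c Hc]. subst f. induction d.
  - exists (fun _ => 0). split; [apply isPd_zero|]. intro x. simpl.
    apply (is_derive_const (K:=R_AbsRing) (0:R)).
  - destruct IHd as [g [Hg Dg]].
    exists (fun x => g x + c d * (INR d * 1 * x ^ pred d)). split.
    + apply isPd_plus. eapply isPd_mono; [exact Hg|simpl; lia].
      apply isPd_scal. destruct d.
      * eapply isPd_ext; [apply isPd_zero|]. intro; simpl; ring.
      * apply isPd_scal. eapply isPd_ext; [apply isPd_pow|]. intro; simpl; ring.
    + intro x. simpl.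
      apply (is_derive_plus (K:=R_AbsRing) (V:=R_NormedModule)); auto.
      apply is_derive_scal. apply is_derive_pow. apply (is_derive_id (K:=R_AbsRing)).
Qed.

Lemma isPd_cont f d : isPd f d -> forall x, continuous f x.
Proof.
  intros H x. destruct (isPd_der f d H) as [f' [_ D]].
  apply (ex_derive_continuous (K:=R_AbsRing) (V:=R_NormedModule)). exists (f' x). apply D.
Qed.

Fixpoint sabs (c : nat -> R) n := match n with O => 0 | S m => sabs c m + Rabs (c m) end.

Lemma sabs_pos c n : 0 <= sabs c n.
Proof. induction n; simpl; [lra|]. pose proof (Rabs_pos (c n)); lra. Qed.

Lemma low_bound c x n : 1 <= Rabs x -> Rabs (low_sum c x n) <= sabs c n * Rabs x ^ pred n.
Proof.
  intro Hx. induction n; simpl.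
  - rewrite Rabs_R0; lra.
  - eapply Rle_trans; [apply Rabs_triang|]. rewrite Rabs_mult, <- RPow_abs.
    assert (Rabs x ^ pred n <= Rabs x ^ n) by (apply Rle_pow; auto; lia).
    pose proof (sabs_pos c n). pose proof (Rabs_pos (c n)).
    assert (sabs c n * Rabs x ^ pred n <= sabs c n * Rabs x ^ n) by
      (apply Rmult_le_compat_l; auto). nra.
Qed.

Lemma exp_INR_mul N z : exp (INR N * z) = exp z ^ N.
Proof.
  induction N. { simpl. rewrite Rmult_0_l, exp_0; auto. }
  rewrite S_INR, Rmult_plus_distr_r, exp_plus, IHN, Rmult_1_l. simpl. ring.
Qed.

Lemma le_exp z : 0 <= z -> z <= exp z.
Proof.
  intro H. destruct (Req_dec z 0).
  - subst; rewrite exp_0; lra.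
  - pose proof (exp_ineq1 z H0); lra.
Qed.

Lemma pow_exp_bound t m : 1 <= t -> t ^ S m <= INR (S m) ^ S m * exp (t ^ 2).
Proof.
  intro Ht. set (N := S m). assert (HN : 0 < INR N) by (apply lt_0_INR; unfold N; lia).
  set (z := t ^ 2 / INR N).
  assert (Hz : 0 <= z) by (unfold z; apply Rdiv_le_0_compat; nra).
  assert (E : exp (t ^ 2) = exp z ^ N).
  { rewrite <- exp_INR_mul. f_equal. unfold z. field. lra. }
  rewrite E.
  assert (z ^ N <= exp z ^ N) by (apply pow_incr; split; auto; apply le_exp; auto).
  assert (INR N ^ N * z ^ N = t ^ (2 * N)).
  { rewrite <- Rpow_mult_distr, pow_mult. f_equal. unfold z; field; lra. }
  assert (t ^ N <= t ^ (2 * N)) by (apply Rle_pow; auto; lia).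
  assert (0 <= INR N ^ N) by (apply pow_le; lra).
  nra.
Qed.

Lemma pol_lim f d : isPd f d -> forall eps, 0 < eps -> exists M, forall x,
  M <= Rabs x -> Rabs (f x * exp (- x ^ 2)) < eps.
Proof.
  intros [c Hc] eps He. subst f.
  set (m := pred d). set (N := S m). set (S := sabs c d).
  set (K := S * INR N ^ N).
  assert (HS : 0 <= S) by apply sabs_pos.
  assert (HK : 0 <= K) by (unfold K; apply Rmult_le_pos; auto; apply pow_le; apply pos_INR).
  exists (Rmax 1 (K / eps + 1)). intros x Hx.
  assert (H1 : 1 <= Rabs x) by (eapply Rle_trans; [apply Rmax_l|exact Hx]).
  assert (H2 : K / eps + 1 <= Rabs x) by (eapply Rle_trans; [apply Rmax_r|exact Hx]).
  set (t := Rabs x) in *.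
  assert (Ht2 : t ^ 2 = x ^ 2) by (unfold t; rewrite RPow_abs, Rabs_right;
     [auto|apply Rle_ge, pow2_ge_0]).
  assert (B1 := low_bound c x d H1). fold t S m in B1.
  assert (B2 := pow_exp_bound t m H1). fold N in B2. rewrite Ht2 in B2.
  set (E := exp (x ^ 2)) in *. assert (HE : 0 < E) by apply exp_pos.
  rewrite exp_Ropp. fold E. rewrite Rabs_mult, (Rabs_right (/ E)) by (left; apply Rinv_0_lt_compat; auto).
  assert (Htm : 0 <= t ^ m) by (apply pow_le; lra).
  assert (K < eps * t).
  { apply Rmult_lt_reg_r with (/ eps). apply Rinv_0_lt_compat; auto.
    replace (eps * t * / eps) with t by (field; lra). unfold Rdiv in H2. lra. }
  assert (Hl : Rabs (low_sum c x d) * t <= K * E).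
  { unfold K. simpl in B2. 
    assert (Rabs (low_sum c x d) * t <= S * t ^ m * t) by (apply Rmult_le_compat_r; lra).
    assert (S * (t * t ^ m) <= S * (INR N ^ N * E)) by (apply Rmult_le_compat_l; auto).
    nra. }
  apply Rmult_lt_reg_r with (E * t). nra.
  replace (Rabs (low_sum c x d) * / E * (E * t)) with (Rabs (low_sum c x d) * t) by (field; lra).
  nra.
Qed.

Lemma derE x : is_derive (fun x => exp (- x ^ 2)) x (- 2 * x * exp (- x ^ 2)).
Proof. auto_derive; auto. replace (x * (x * 1)) with (x ^ 2) by ring. ring. Qed.

Lemma contE x : continuous (fun x => exp (- x ^ 2)) x.
Proof.
  apply (ex_derive_continuous (K:=R_AbsRing) (V:=R_NormedModule)).
  eexists; apply derE.
Qed.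

Lemma cont_mulE f x : continuous f x -> continuous (fun x => f x * exp (- x ^ 2)) x.
Proof.
  intro H. apply (continuous_mult (K:=R_AbsRing) f (fun x => exp (- x ^ 2))); auto.
  apply contE.
Qed.



Lemma der_mulE f f' x : is_derive f x (f' x) ->
  is_derive (fun x => f x * exp (- x ^ 2)) x ((f' x - 2 * x * f x) * exp (- x ^ 2)).
Proof.
  intro H.
  assert (K := is_derive_mult (K:=R_AbsRing) f (fun x => exp (- x ^ 2)) x _ _ H (derE x)).
  replace ((f' x - 2 * x * f x) * exp (- x ^ 2)) with
    (plus (mult (f' x) (exp (- x ^ 2))) (mult (f x) (- 2 * x * exp (- x ^ 2)))).
  apply K. intros; apply Rmult_comm.
  change (f' x * exp (- x ^ 2) + f x * (- 2 * x * exp (- x ^ 2)) =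
    (f' x - 2 * x * f x) * exp (- x ^ 2)). ring.
Qed.

Lemma IBP a f f' d d' : isPd f d -> isPd f' d' -> (forall x, is_derive f x (f' x)) ->
  W a (fun x => f' x - 2 * x * f x) (f (- a) * exp (- (- a) ^ 2) - f a * exp (- a ^ 2)).
Proof.
  intros Hf Hf' D.
  assert (Hg : isPd (fun x => f' x - 2 * x * f x) (S (d' + d))).
  { apply isPd_minus. eapply isPd_mono; [exact Hf'|lia].
    eapply isPd_ext. apply isPd_scal with (k := 2). apply isPd_xmul. 
    eapply isPd_mono; [exact Hf|]. 2: intro; simpl; ring. lia. }
  set (g := fun x => f x * exp (- x ^ 2)).
  assert (Dg : forall x, is_derive g x ((f' x - 2 * x * f x) * exp (- x ^ 2))).
  { intro x; apply der_mulE; auto. }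
  assert (Cg : forall x, continuous (fun x => (f' x - 2 * x * f x) * exp (- x ^ 2)) x).
  { intro x. apply (cont_mulE (fun x => f' x - 2 * x * f x)). eapply isPd_cont; eauto. }
  assert (Lg := pol_lim f d Hf).
  exists (g (- a)), (- g a). split; [|split].
  - intros eps He. destruct (Lg eps He) as [M HM].
    exists (Rmin (- a) (- Rabs M)). split; [apply Rmin_l|].
    intros b Hb. exists (g (- a) - g b). split.
    + apply (is_RInt_derive (V:=R_CompleteNormedModule) g (fun x => (f' x - 2 * x * f x) * exp (- x ^ 2))); intros; [apply Dg|apply Cg].
    + replace (g (- a) - g b - g (- a)) with (- g b) by ring. rewrite Rabs_Ropp.
      apply HM. assert (b <= - Rabs M) by (eapply Rle_trans; [exact Hb|apply Rmin_r]).
      pose proof (Rle_abs M). pose proof (Rabs_pos M). rewrite Rabs_left1 by lra; lra.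
  - intros eps He. destruct (Lg eps He) as [M HM].
    exists (Rmax a (Rabs M)). split; [apply Rmax_l|].
    intros b Hb. exists (g b - g a). split.
    + apply (is_RInt_derive (V:=R_CompleteNormedModule) g (fun x => (f' x - 2 * x * f x) * exp (- x ^ 2))); intros; [apply Dg|apply Cg].
    + replace (g b - g a - - g a) with (g b) by ring.
      apply HM. assert (Rabs M <= b) by (eapply Rle_trans; [apply Rmax_r|exact Hb]).
      pose proof (Rle_abs M). pose proof (Rabs_pos M). rewrite Rabs_right by lra; lra.
  - unfold g. ring.
Qed.

Lemma exp_le a b : a <= b -> exp a <= exp b.
Proof. intro H. destruct (Req_dec a b). subst; lra. left; apply exp_increasing; lra. Qed.

Lemma W_pos a f l d x0 : isPd f d -> (forall x, 0 <= f x) -> 0 <= x0 -> a <= x0 ->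
  (forall x, x0 <= x <= x0 + 1 -> 1 <= f x) -> W a f l -> 0 < l.
Proof.
  intros Hf Hnn Hx0 Hax0 Hlow [l1 [l2 [H1 [H2 H3]]]].
  set (F := fun x => f x * exp (- x ^ 2)) in *.
  assert (CF : forall x, continuous F x) by (intro; apply cont_mulE; eapply isPd_cont; eauto).
  assert (EX : forall u v, ex_RInt F u v) by (intros; apply (ex_RInt_continuous (V:=R_CompleteNormedModule)); intros; apply CF).
  assert (FP : forall x, 0 <= F x) by (intro; unfold F; apply Rmult_le_pos; auto; left; apply exp_pos).
  set (del := exp (- (x0 + 1) ^ 2)). assert (Hd : 0 < del) by apply exp_pos.
  assert (A1 : 0 <= l1).
  { destruct (Rle_lt_dec 0 l1) as [|Hl]; auto.
    destruct (H1 (- l1)) as [B [HB K]]; [lra|].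
    destruct (K B) as [v [Hv Hw]]; [lra|]. apply isu in Hv.
    assert (0 <= RInt F B (- a)) by (apply RInt_ge_0; auto).
    rewrite Hv in H. rewrite Rabs_right in Hw; lra. }
  assert (A2 : del <= l2).
  { destruct (Rle_lt_dec del l2) as [|Hl]; auto.
    destruct (H2 (del - l2)) as [B [HB K]]; [lra|].
    set (b := Rmax B (x0 + 1)).
    assert (Hb1 : B <= b) by apply Rmax_l. assert (Hb2 : x0 + 1 <= b) by apply Rmax_r.
    destruct (K b Hb1) as [v [Hv Hw]]. apply isu in Hv.
    assert (E1 : RInt F a x0 + (RInt F x0 (x0 + 1) + RInt F (x0 + 1) b) = RInt F a b).
    { assert (C1 : RInt F x0 (x0 + 1) + RInt F (x0 + 1) b = RInt F x0 b) by
        exact (RInt_Chasles (V:=R_CompleteNormedModule) F x0 (x0 + 1) b (EX _ _) (EX _ _)).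
      assert (C2 : RInt F a x0 + RInt F x0 b = RInt F a b) by
        exact (RInt_Chasles (V:=R_CompleteNormedModule) F a x0 b (EX _ _) (EX _ _)).
      rewrite C1; exact C2. }
    assert (0 <= RInt F a x0) by (apply RInt_ge_0; auto).
    assert (0 <= RInt F (x0 + 1) b) by (apply RInt_ge_0; auto).
    assert (del <= RInt F x0 (x0 + 1)).
    { assert (RInt (fun _ => del) x0 (x0 + 1) <= RInt F x0 (x0 + 1)).
      { apply RInt_le; auto; [lra|apply ex_RInt_const|].
        intros x Hx. unfold F. assert (1 <= f x) by (apply Hlow; lra).
        assert (del <= exp (- x ^ 2)) by (apply exp_le; nra).
        pose proof (exp_pos (- x ^ 2)). nra. }
      rewrite RInt_const in H4. unfold scal in H4; simpl in H4. unfold mult in H4; simpl in H4.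
      replace ((x0 + 1 - x0) * del) with del in H4 by ring. exact H4. }
    rewrite Hv in E1. 
    assert (del <= v) by lra. rewrite Rabs_right in Hw; lra. }
  lra.
Qed.

Lemma isPd_P C n : isPd (mpoly C n) (S n).
Proof.
  unfold mpoly. apply isPd_plus. apply isPd_pow.
  eapply isPd_mono; [exists (C n); reflexivity|lia].
Qed.

Lemma P0 C x : mpoly C 0 x = 1.
Proof. unfold mpoly; simpl; ring. Qed.

Lemma hPP a C h : monic_OPs a C h -> forall m n,
  W a (fun x => mpoly C m x * mpoly C n x) (if Nat.eqb m n then h n else 0).
Proof.
  intros [H1 H2] m n. destruct (Nat.eqb_spec m n).
  - subst. apply W_ext with (fun x => mpoly C n x ^ 2). intro; ring. apply w_W; auto.
  - apply w_W; auto.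
Qed.

Lemma W0 a C h : monic_OPs a C h -> W a (fun _ => 0) 0.
Proof.
  intro H. pose proof (hPP a C h H 0 0).
  eapply W_comb; [exact H0|exact H0| |]. intro; instantiate (1 := -1); ring. ring.
Qed.

Fixpoint SP (C : nat -> nat -> R) (e : nat -> R) d x :=
  match d with O => 0 | S k => SP C e k x + e k * mpoly C k x end.

Lemma SP_eq C e e' d x : (forall k, (k < d)%nat -> e k = e' k) -> SP C e d x = SP C e' d x.
Proof.
  induction d; simpl; intros H; auto. rewrite IHd by (intros; apply H; lia).
  rewrite H by lia; auto.
Qed.

Lemma low_sum_lin c c' t x n :
  low_sum (fun k => c k + t * c' k) x n = low_sum c x n + t * low_sum c' x n.
Proof. induction n; simpl; [ring|]. rewrite IHn. ring. Qed.

Lemma span C f d : isPd f d -> exists e, forall x, f x = SP C e d x.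
Proof.
  revert f. induction d; intros f [c Hc]; subst f.
  - exists (fun _ => 0). intro; reflexivity.
  - destruct (IHd (fun x => low_sum (fun k => c k + (- c d) * C d k) x d)) as [e He].
    { exists (fun k => c k + (- c d) * C d k); reflexivity. }
    exists (fun k => if Nat.eqb k d then c d else e k). intro x. simpl.
    rewrite Nat.eqb_refl. rewrite (SP_eq C _ e) by (intros k Hk; destruct (Nat.eqb_spec k d); auto; lia).
    rewrite <- He. unfold mpoly. rewrite low_sum_lin. ring.
Qed.

Lemma SPval a C h : monic_OPs a C h -> forall e d j,
  W a (fun x => SP C e d x * mpoly C j x) (if Nat.ltb j d then e j * h j else 0).
Proof.
  intros H e d j. induction d.
  - simpl. eapply W_ext; [|apply (W0 a C h H)]. intro; simpl; ring.
  - eapply (W_comb _ _ _ _ _ _ (e d)); [exact IHd|apply (hPP a C h H d j)| |].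
    + intro x. simpl. ring.
    + destruct (Nat.ltb_spec j (S d)), (Nat.ltb_spec j d), (Nat.eqb_spec d j); subst; try lia; ring.
Qed.

Lemma W_val a f l l' : W a f l -> l = l' -> W a f l'.
Proof. intros H E; subst; auto. Qed.

Lemma orth_low a C h : monic_OPs a C h -> forall f d m, isPd f d -> (d <= m)%nat ->
  W a (fun x => f x * mpoly C m x) 0.
Proof.
  intros H f d m Hf Hd. destruct (span C f d Hf) as [e He].
  eapply W_ext; [|eapply W_val; [apply (SPval a C h H e d m)|]].
  - intro; simpl; rewrite He; auto.
  - destruct (Nat.ltb_spec m d); auto; lia.
Qed.

Lemma orth_low' a C h : monic_OPs a C h -> forall f d m, isPd f d -> (d <= m)%nat ->
  W a (fun x => mpoly C m x * f x) 0.
Proof.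
  intros. eapply W_ext; [|eapply orth_low; eauto]. intro; simpl; ring.
Qed.

Lemma exists_W a C h : monic_OPs a C h -> forall f d, isPd f d -> exists l, W a f l.
Proof.
  intros H f d Hf. destruct (span C f d Hf) as [e He].
  eexists. eapply W_ext; [|apply (SPval a C h H e d 0)].
  intro; simpl; rewrite He, P0; ring.
Qed.

Lemma SP_zero C e d x : (forall k, (k < d)%nat -> e k = 0) -> SP C e d x = 0.
Proof.
  induction d; simpl; intros H; auto. rewrite IHd by (intros; apply H; lia).
  rewrite H by lia; ring.
Qed.

Lemma Zlem a C h : monic_OPs a C h -> (forall k, 0 < h k) -> forall f d, isPd f d ->
  (forall k, (k < d)%nat -> W a (fun x => f x * mpoly C k x) 0) -> forall x, f x = 0.
Proof.
  intros H hp f d Hf Ho x. destruct (span C f d Hf) as [e He].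
  rewrite He. apply SP_zero. intros k Hk.
  assert (K := SPval a C h H e d k).
  assert (K2 : W a (fun x => SP C e d x * mpoly C k x) 0).
  { eapply W_ext; [|apply (Ho k Hk)]. intro; simpl; rewrite He; auto. }
  pose proof (W_uniq _ _ _ _ K K2). destruct (Nat.ltb_spec k d); [|lia].
  specialize (hp k). apply Rmult_integral in H0. destruct H0; auto. lra.
Qed.

Lemma hpos a C h : monic_OPs a C h -> forall k, 0 < h k.
Proof.
  intros H k. destruct H as [H1 H2].
  set (Sk := sabs (C k) k).
  assert (HS : 0 <= Sk) by apply sabs_pos.
  apply (W_pos a (fun x => mpoly C k x ^ 2) (h k) (S k + S k) (Rmax a (Sk + 1))).
  - eapply isPd_ext. apply isPd_mult; apply (isPd_P C). intro; simpl; ring.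
  - intro; apply pow2_ge_0.
  - pose proof (Rmax_r a (Sk + 1)); lra.
  - apply Rmax_l.
  - intros x Hx. assert (Hx1 : Sk + 1 <= x) by (pose proof (Rmax_r a (Sk + 1)); lra).
    assert (1 <= mpoly C k x).
    { unfold mpoly. assert (Ha : 1 <= Rabs x) by (rewrite Rabs_right; lra).
      pose proof (low_bound (C k) x k Ha) as B. fold Sk in B.
      rewrite (Rabs_right x) in B by lra.
      pose proof (Rle_abs (- low_sum (C k) x k)). rewrite Rabs_Ropp in H.
      destruct k.
      - simpl. lra.
      - set (L := low_sum (C (S k)) x (S k)) in *. replace (x ^ S k) with (x * x ^ k) by (simpl; ring). simpl pred in B. assert (1 <= x ^ k) by (apply pow_R1_Rle; lra). nra. }
    nra.
  - apply w_W; auto.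
Qed.

Lemma pow_neg x n : (- x) ^ n = (-1) ^ n * x ^ n.
Proof. replace (- x) with ((-1) * x) by ring. apply Rpow_mult_distr. Qed.

Lemma PP0 a C h : monic_OPs a C h -> forall m n, m <> n ->
  W a (fun x => mpoly C m x * mpoly C n x) 0.
Proof.
  intros H m n Hmn. eapply W_val; [apply (hPP a C h H m n)|].
  destruct (Nat.eqb_spec m n); auto; lia.
Qed.

Lemma parity a C h : monic_OPs a C h -> forall n x, mpoly C n (- x) = (-1) ^ n * mpoly C n x.
Proof.
  intros H n x. apply Rminus_diag_uniq.
  apply (Zlem a C h H (hpos a C h H) (fun x => mpoly C n (- x) - (-1) ^ n * mpoly C n x) n).
  - eapply isPd_ext. apply (isPd_minus (fun x => low_sum (C n) (- x) n)
       (fun x => (-1) ^ n * low_sum (C n) x n)).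
    apply (isPd_opp (fun x => low_sum (C n) x n)). exists (C n); reflexivity.
    apply isPd_scal. exists (C n); reflexivity.
    intro y. unfold mpoly. rewrite pow_neg. ring.
  - intros k Hk.
    assert (A : W a (fun x => mpoly C n (- x) * mpoly C k x) 0).
    { assert (A0 : W a (fun x => mpoly C n x * mpoly C k (- x)) 0).
      { apply (orth_low' a C h H (fun x => mpoly C k (- x)) (S k)); [|lia].
        apply isPd_opp. apply isPd_P. }
      apply W_refl in A0. eapply W_ext; [|exact A0]. intro; simpl; rewrite Ropp_involutive; auto. }
    eapply (W_comb _ _ _ _ _ _ (- (-1) ^ n)); [exact A|apply (PP0 a C h H n k); lia| |].
    + intro; simpl; ring.
    + ring.
Qed.

Lemma odd0 a C h : monic_OPs a C h -> forall n,
  W a (fun x => x * mpoly C n x * mpoly C n x) 0.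
Proof.
  intros H n.
  assert (Hp : isPd (fun x => x * mpoly C n x * mpoly C n x) (S (S n) + S n)).
  { apply isPd_mult; [apply isPd_xmul|]; apply isPd_P. }
  destruct (exists_W a C h H _ _ Hp) as [l Hl].
  assert (Hr := W_refl _ _ _ Hl).
  assert (Hm : W a (fun x => x * mpoly C n x * mpoly C n x) (- l)).
  { apply (W_comb a (fun _ => 0) (fun x => (- x) * mpoly C n (- x) * mpoly C n (- x))
      (fun x => x * mpoly C n x * mpoly C n x) 0 l (-1) (- l) (W0 a C h H) Hr).
    - intro x. rewrite (parity a C h H).
      assert (Hs : (-1) ^ n * (-1) ^ n = 1).
      { rewrite <- Rpow_mult_distr. replace (-1 * -1) with 1 by ring. apply pow1. }
      transitivity (x * mpoly C n x * mpoly C n x * ((-1) ^ n * (-1) ^ n)).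
      + rewrite Hs; ring.
      + ring.
    - ring. }
  pose proof (W_uniq _ _ _ _ Hl Hm). replace l with 0 in Hl by lra. exact Hl.
Qed.

Lemma is_derive_val (f : R -> R) x l l' : is_derive f x l -> l = l' -> is_derive f x l'.
Proof. intros H E; subst; auto. Qed.

Lemma der_pow n x : is_derive (fun x => x ^ n) x (INR n * x ^ pred n).
Proof.
  eapply is_derive_val. apply (is_derive_pow (fun x => x)). apply (is_derive_id (K:=R_AbsRing)).
  change (INR n * 1 * x ^ Init.Nat.pred n = INR n * x ^ Init.Nat.pred n). ring.
Qed.

Lemma derP C n : exists D, isPd D n /\ (forall x, is_derive (mpoly C n) x (D x)) /\
  isPd (fun x => D x - INR n * mpoly C (pred n) x) (pred n) /\
  isPd (fun x => x * D x - INR n * mpoly C n x) n.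
Proof.
  destruct n as [|m].
  - exists (fun _ => 0). split; [apply isPd_zero|split; [|split]].
    + intro x. apply (is_derive_ext (fun _ => 1)). intro; rewrite P0; auto.
      apply (is_derive_const (K:=R_AbsRing) (1:R)).
    + eapply isPd_ext; [apply isPd_zero|]. intro; simpl; ring.
    + eapply isPd_ext; [apply isPd_zero|]. intro; simpl; ring.
  - destruct (isPd_der (fun x => low_sum (C (S m)) x (S m)) (S m)) as [g [Hg Dg]].
    { exists (C (S m)); reflexivity. }
    simpl pred in Hg.
    exists (fun x => INR (S m) * x ^ m + g x). split; [|split; [|split]].
    + apply isPd_plus. apply isPd_scal, isPd_pow. eapply isPd_mono; [exact Hg|lia].
    + intro x. unfold mpoly.
      apply (is_derive_plus (K:=R_AbsRing) (V:=R_NormedModule) (fun x => x ^ S m)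
        (fun x => low_sum (C (S m)) x (S m))).
      * apply der_pow.
      * apply Dg.
    + eapply isPd_ext. apply (isPd_minus g (fun x => INR (S m) * low_sum (C m) x m)). auto.
      apply isPd_scal. exists (C m); reflexivity.
      intro x; simpl pred; unfold mpoly; ring.
    + eapply isPd_ext. apply (isPd_minus (fun x => x * g x) (fun x => INR (S m) * low_sum (C (S m)) x (S m))).
      apply isPd_xmul; auto.
      apply isPd_scal. exists (C (S m)); reflexivity.
      intro x; unfold mpoly; simpl; ring.
Qed.

Lemma isPd_xP C k : isPd (fun x => x * mpoly C k x - mpoly C (S k) x) (S k).
Proof.
  eapply isPd_ext. apply (isPd_minus (fun x => x * low_sum (C k) x k) (fun x => low_sum (C (S k)) x (S k))).
  apply isPd_xmul; exists (C k); reflexivity. exists (C (S k)); reflexivity.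
  intro x; unfold mpoly; simpl; ring.
Qed.

Lemma xPP a C h : monic_OPs a C h -> forall n k, (k <= n)%nat ->
  W a (fun x => x * mpoly C n x * mpoly C k x) (if Nat.eqb n (S k) then h n else 0).
Proof.
  intros H n k Hk. destruct (Nat.eq_dec k n) as [E|E].
  - subst k. eapply W_val; [apply (odd0 a C h H)|]. destruct (Nat.eqb_spec n (S n)); auto; lia.
  - destruct (Nat.eqb_spec n (S k)) as [E2|E2].
    + subst n. eapply (W_comb _ _ _ _ _ _ 1); [apply (hPP a C h H (S k) (S k))|
        apply (orth_low' a C h H _ _ (S k) (isPd_xP C k)); lia| |].
      * intro x; simpl. ring.
      * rewrite Nat.eqb_refl. ring.
    + eapply W_ext; [|apply (orth_low' a C h H (fun x => x * mpoly C k x) (S (S k)) n)].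
      * intro; simpl; ring.
      * apply isPd_xmul, isPd_P.
      * lia.
Qed.

Definition bb (h : nat -> R) n := match n with O => 0 | S m => h (S m) / h m end.

Lemma recur a C h : monic_OPs a C h -> forall n x,
  x * mpoly C n x = mpoly C (S n) x + bb h n * mpoly C (pred n) x.
Proof.
  intros H n x. apply Rminus_diag_uniq.
  assert (Z := Zlem a C h H (hpos a C h H)
    (fun x => x * mpoly C n x - mpoly C (S n) x - bb h n * mpoly C (pred n) x) (S n)).
  transitivity ((fun x => x * mpoly C n x - mpoly C (S n) x - bb h n * mpoly C (pred n) x) x).
  simpl; ring. apply Z.
  - apply isPd_minus. apply isPd_xP. apply isPd_scal. eapply isPd_mono; [apply isPd_P|lia].
  - intros k Hk.
    assert (A := xPP a C h H n k ltac:(lia)).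
    assert (B := PP0 a C h H (S n) k ltac:(lia)).
    assert (Cc := hPP a C h H (pred n) k).
    assert (T1 := W_lin _ _ _ _ _ (-1) A B).
    assert (T2 := W_lin _ _ _ _ _ (- bb h n) T1 Cc).
    eapply W_ext; [|eapply W_val; [exact T2|]].
    + intro; simpl; ring.
    + pose proof (hpos a C h H).
      destruct n as [|m]; simpl bb.
      * assert (k = 0%nat) by lia. subst. simpl. ring.
      * destruct (Nat.eqb_spec (S m) (S k)), (Nat.eqb_spec (pred (S m)) k); simpl in *; try lia.
        -- subst. field. specialize (H0 k); lra.
        -- ring.
Qed.

Lemma sgn2 n : (-1) ^ n * (-1) ^ n = 1.
Proof. rewrite <- Rpow_mult_distr. replace (-1 * -1) with 1 by ring. apply pow1. Qed.

Lemma PE1 a C h : monic_OPs a C h -> forall m,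
  INR (S m) * h m - 2 * h (S m) = -2 * exp (- a ^ 2) * mpoly C (S m) a * mpoly C m a.
Proof.
  intros H m. set (n := S m).
  destruct (derP C n) as [Dn [HDn [DDn [HDn1 HDn2]]]].
  destruct (derP C m) as [Dm [HDm [DDm [HDm1 HDm2]]]].
  assert (I := IBP a (fun x => mpoly C n x * mpoly C m x)
     (fun x => Dn x * mpoly C m x + mpoly C n x * Dm x) (S n + S m) (S n + S m)).
  specialize (I (isPd_mult _ _ _ _ (isPd_P C n) (isPd_P C m))).
  assert (V1 : W a (fun x => Dn x * mpoly C m x) (0 + INR n * h m)).
  { eapply (W_comb _ _ _ _ _ _ (INR n)).
    apply (orth_low a C h H _ _ m HDn1); simpl; lia.
    eapply W_val; [apply (hPP a C h H m m)|rewrite Nat.eqb_refl; reflexivity].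
    intro; simpl; ring. reflexivity. }
  assert (V2 : W a (fun x => mpoly C n x * Dm x) 0).
  { apply (orth_low' a C h H _ m n HDm); unfold n; lia. }
  assert (V3 : W a (fun x => x * mpoly C n x * mpoly C m x) (h n)).
  { eapply W_val; [apply (xPP a C h H n m); unfold n; lia|]. unfold n; rewrite Nat.eqb_refl; auto. }
  assert (V := W_lin _ _ _ _ _ (-2) (W_lin _ _ _ _ _ 1 V1 V2) V3).
  specialize (I ltac:(apply isPd_plus;
      [eapply isPd_mono; [apply (isPd_mult _ _ _ _ HDn (isPd_P C m))|lia]
      |eapply isPd_mono; [apply (isPd_mult _ _ _ _ (isPd_P C n) HDm)|lia]])).
  specialize (I ltac:(intro x; eapply is_derive_val;
      [apply (is_derive_mult (K:=R_AbsRing) (mpoly C n) (mpoly C m) x _ _ (DDn x) (DDm x)); intros; apply Rmult_comm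
      |reflexivity])).
  assert (Vx : W a (fun x => (Dn x * mpoly C m x + mpoly C n x * Dm x) - 2 * x * (mpoly C n x * mpoly C m x))
     (0 + INR n * h m + 1 * 0 + -2 * h n)).
  { eapply W_ext; [|exact V]. intro; simpl; ring. }
  pose proof (W_uniq _ _ _ _ I Vx) as U.
  cbv beta in U. rewrite !(parity a C h H) in U. unfold n in U. rewrite <- tech_pow_Rmult in U.
  replace ((- a) ^ 2) with (a ^ 2) in U by ring.
  pose proof (sgn2 m).
  replace (-1 * (-1) ^ m * mpoly C (S m) a * ((-1) ^ m * mpoly C m a)) with
    (- (mpoly C (S m) a * mpoly C m a)) in U by (transitivity (-1 * ((-1) ^ m * (-1) ^ m) * mpoly C (S m) a * mpoly C m a); [rewrite H0; ring|ring]).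
  unfold n. lra.
Qed.

Lemma PE2 a C h : monic_OPs a C h -> forall n,
  h n + 2 * (INR n * h n) - 2 * (h (S n) + bb h n ^ 2 * h (pred n)) =
  -2 * a * exp (- a ^ 2) * mpoly C n a ^ 2.
Proof.
  intros H n.
  destruct (derP C n) as [Dn [HDn [DDn [HDn1 HDn2]]]].
  assert (I := IBP a (fun x => x * mpoly C n x * mpoly C n x)
     (fun x => mpoly C n x * mpoly C n x + 2 * (mpoly C n x * (x * Dn x))) (S (S n) + S n) (S n + S (S n))).
  specialize (I (isPd_mult _ _ _ _ (isPd_xmul _ _ (isPd_P C n)) (isPd_P C n))).
  specialize (I ltac:(apply isPd_plus;
      [eapply isPd_mono; [apply (isPd_mult _ _ _ _ (isPd_P C n) (isPd_P C n))|lia]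
      |apply isPd_scal; eapply isPd_mono; [apply (isPd_mult _ _ _ _ (isPd_P C n) (isPd_xmul _ _ HDn))|lia]])).
  assert (DX : forall x, is_derive (fun x => x * mpoly C n x) x (1 * mpoly C n x + x * Dn x)).
  { intro x. exact (is_derive_mult (K:=R_AbsRing) (fun x => x) (mpoly C n) x one (Dn x)
      (is_derive_id x) (DDn x) Rmult_comm). }
  specialize (I ltac:(intro x; eapply is_derive_val;
      [exact (is_derive_mult (K:=R_AbsRing) (fun x => x * mpoly C n x) (mpoly C n) x _ (Dn x) (DX x) (DDn x) Rmult_comm)
      |change ((1 * mpoly C n x + x * Dn x) * mpoly C n x + x * mpoly C n x * Dn x =
          mpoly C n x * mpoly C n x + 2 * (mpoly C n x * (x * Dn x))); ring])).
  assert (V1 := hPP a C h H n n). rewrite Nat.eqb_refl in V1.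
  assert (V2 : W a (fun x => mpoly C n x * (x * Dn x)) (0 + INR n * h n)).
  { eapply (W_comb _ _ _ _ _ _ (INR n)).
    apply (orth_low' a C h H _ _ n HDn2); lia. exact V1.
    intro; simpl; ring. reflexivity. }
  assert (V3 : W a (fun x => (x * mpoly C n x) * (x * mpoly C n x))
     (h (S n) + 2 * bb h n * 0 + bb h n ^ 2 * h (pred n))).
  { assert (A := hPP a C h H (S n) (S n)). rewrite Nat.eqb_refl in A.
    assert (B := PP0 a C h H (S n) (pred n) ltac:(lia)).
    assert (Cc := hPP a C h H (pred n) (pred n)). rewrite Nat.eqb_refl in Cc.
    assert (T := W_lin _ _ _ _ _ (bb h n ^ 2) (W_lin _ _ _ _ _ (2 * bb h n) A B) Cc).
    eapply W_ext; [|exact T]. intro x; simpl. rewrite (recur a C h H). ring. }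
  assert (V := W_lin _ _ _ _ _ (-2) (W_lin _ _ _ _ _ 2 V1 V2) V3).
  assert (Vx : W a (fun x => (mpoly C n x * mpoly C n x + 2 * (mpoly C n x * (x * Dn x)))
       - 2 * x * (x * mpoly C n x * mpoly C n x))
     (h n + 2 * (0 + INR n * h n) + -2 * (h (S n) + 2 * bb h n * 0 + bb h n ^ 2 * h (pred n)))).
  { eapply W_ext; [|exact V]. intro; simpl; ring. }
  pose proof (W_uniq _ _ _ _ I Vx) as U.
  cbv beta in U. rewrite !(parity a C h H) in U.
  replace ((- a) ^ 2) with (a ^ 2) in U by ring.
  pose proof (sgn2 n).
  replace (- a * ((-1) ^ n * mpoly C n a) * ((-1) ^ n * mpoly C n a)) with
    (- a * mpoly C n a ^ 2) in U by (transitivity (- a * ((-1) ^ n * (-1) ^ n) * mpoly C n a ^ 2); [rewrite H0; ring|ring]).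
  lra.
Qed.

Lemma Nlem a C h : monic_OPs a C h -> forall j,
  INR (S j) + r_seq a C h (S j) = 2 * h (S j) / h j.
Proof.
  intros H j. pose proof (PE1 a C h H j). pose proof (hpos a C h H j).
  unfold r_seq. replace (2 * exp (- a ^ 2) * mpoly C (S j) a * mpoly C j a)
    with (2 * h (S j) - INR (S j) * h j) by lra. field. lra.
Qed.

Lemma Alem a C h : monic_OPs a C h -> forall j,
  r_seq a C h (S j) + r_seq a C h j = 2 * a * exp (- a ^ 2) * mpoly C j a ^ 2 / h j.
Proof.
  intros H j. pose proof (PE2 a C h H j) as E. pose proof (hpos a C h H j).
  assert (HN := Nlem a C h H j).
  replace (r_seq a C h (S j)) with (2 * h (S j) / h j - INR (S j)) by lra.
  destruct j as [|k].
  - change (r_seq a C h 0) with 0. unfold bb in E. simpl pred in E.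
    change (INR 1) with 1. change (INR 0) with 0 in E.
    replace (2 * a * exp (- a ^ 2) * mpoly C 0 a ^ 2) with
      (- (h 0%nat + 2 * (0 * h 0%nat) - 2 * (h 1%nat + 0 ^ 2 * h 0%nat))) by lra. field. lra.
  - pose proof (hpos a C h H k). assert (HN2 := Nlem a C h H k).
    replace (r_seq a C h (S k)) with (2 * h (S k) / h k - INR (S k)) by lra.
    replace (2 * a * exp (- a ^ 2) * mpoly C (S k) a ^ 2) with
      (- (h (S k) + 2 * (INR (S k) * h (S k)) - 2 * (h (S (S k)) + bb h (S k) ^ 2 * h (pred (S k))))) by lra.
    unfold bb, pred. rewrite (S_INR (S k)). field. lra.
Qed.

Theorem mainTheorem3 (a : R) (C : nat -> nat -> R) (h : nat -> R) :
  0 < a -> monic_OPs a C h ->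
  forall n : nat, (1 <= n)%nat ->
    let r := r_seq a C h in
    let y := fun k => - 2 * r k / a ^ 2 in
    a ^ 2 * r n ^ 2 = (INR n + r n) / 2 * (r (S n) + r n) * (r n + r (pred n)) /\
    (y (S n) + y n) * (y n + y (pred n)) = - 4 * y n ^ 2 / (y n - 2 * INR n / a ^ 2).
Proof.
  intros Ha H n Hn r y. destruct n as [|m]; [lia|]. unfold y, r. clear y r. simpl pred.
  pose proof (hpos a C h H m). pose proof (hpos a C h H (S m)).
  assert (A1 := Alem a C h H (S m)). assert (A2 := Alem a C h H m).
  assert (N := Nlem a C h H m).
  split.
  - rewrite A1, A2, N. unfold r_seq at 1. field. lra.
  - replace (-2 * r_seq a C h (S (S m)) / a ^ 2 + -2 * r_seq a C h (S m) / a ^ 2) with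
      (-2 / a ^ 2 * (r_seq a C h (S (S m)) + r_seq a C h (S m))) by (field; lra).
    replace (-2 * r_seq a C h (S m) / a ^ 2 + -2 * r_seq a C h m / a ^ 2) with
      (-2 / a ^ 2 * (r_seq a C h (S m) + r_seq a C h m)) by (field; lra).
    replace (-2 * r_seq a C h (S m) / a ^ 2 - 2 * INR (S m) / a ^ 2) with
      (-2 / a ^ 2 * (INR (S m) + r_seq a C h (S m))) by (field; lra).
    rewrite A1, A2, N. unfold r_seq. field. lra.
Qed.
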